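(* Let $V$ be a metric 3-Lie algebra and $I\lhd V$ an ideal. Then (1) $I^\perp\lhd V$ is also an ideal; (2) $I^\perp\lhd Z(I)$; and (3) if $I$ is minimal then $I^\perp$ is maximal.
   Context: A metric 3-Lie algebra is a finite-dimensional real vector space $V$ with a totally skewsymmetric trilinear bracket satisfying the fundamental identity $[x,y,[z,s,t]]=[[x,y,z],s,t]+[z,[x,y,s],t]+[z,s,[x,y,t]]$ and a nondegenerate symmetric bilinear form $\langle-,-\rangle$ with $\langle[x,y,z],s\rangle+\langle z,[x,y,s]\rangle=0$. For subspaces $W_i$, $[W_1,W_2,W_3]$ is the span of brackets of their elements. An ideal $I\lhd V$ is a subspace with $[I,V,V]\subset I$; for a subalgebra $S$ (subspace with $[S,S,S]\subset S$), $I\lhd S$ means $I\subset S$ and $[I,S,S]\subset I$. $I^\perp$ is the orthogonal complement with respect to $\langle-,-\rangle$. The centraliser of a subspace $W$ is $Z(W)=\{z\in V:[z,w,y]=0\ \forall w\in W,y\in V\}$ (a subalgebra). An ideal $I$ is minimal if every ideal contained in $I$ is $0$ or $I$; maximal if every ideal containing $I$ is $I$ or $V$. *)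

(* Defs.v *)
From HB Require Import structures.
From mathcomp Require Import all_boot all_order all_algebra.
From mathcomp Require Import reals.
Set Implicit Arguments. Unset Strict Implicit. Unset Printing Implicit Defensive.
Import Order.TTheory GRing.Theory Num.Theory.
Local Open Scope ring_scope.

Section Metric3Lie.
Variables (R : realType) (V : vectType R).
Variable br : V -> V -> V -> V.
Variable form : V -> V -> R.

Record metric3Lie : Prop := Metric3Lie {
  br_linear1 : forall (a : R) x x' y z, br (a *: x + x') y z = a *: br x y z + br x' y z;
  br_linear2 : forall (a : R) x y y' z, br x (a *: y + y') z = a *: br x y z + br x y' z;
  br_linear3 : forall (a : R) x y z z', br x y (a *: z + z') = a *: br x y z + br x y z';
  br_skew12 : forall x y z, br x y z = - br y x z;
  br_skew23 : forall x y z, br x y z = - br x z y;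
  br_fundamental : forall x y z s t,
    br x y (br z s t) = br (br x y z) s t + br z (br x y s) t + br z s (br x y t);
  form_linear1 : forall (a : R) x x' y, form (a *: x + x') y = a * form x y + form x' y;
  form_sym : forall x y, form x y = form y x;
  form_nondeg : forall x, (forall y, form x y = 0) -> x = 0;
  form_invariant : forall x y z s, form (br x y z) s + form z (br x y s) = 0
}.

(* I is an ideal: [I, V, V] is contained in I (I a subspace, so it suffices
   that every bracket [x,y,z] with x in I lies in I). *)
Definition ideal (I : {vspace V}) : Prop :=
  forall x y z, x \in I -> br x y z \in I.

Definition ideal_of (I : {vspace V}) (S : V -> Prop) : Prop :=
  (forall x, x \in I -> S x) /\
  (forall x s t, x \in I -> S s -> S t -> br x s t \in I).

Definition centraliser (W : {vspace V}) : V -> Prop :=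
  fun z => forall w y, w \in W -> br z w y = 0.

Definition minimal_ideal (I : {vspace V}) : Prop :=
  ideal I /\ forall J : {vspace V}, ideal J -> (J <= I)%VS -> J = 0%VS \/ J = I.

Definition maximal_ideal (I : {vspace V}) : Prop :=
  ideal I /\ forall J : {vspace V}, ideal J -> (I <= J)%VS -> J = I \/ J = fullv.

(* Orthogonal complement I^perp, realised as the kernel of the map
   v |-> (form v b_i)_i where (b_i) is the basis vbasis I of I.  When form is
   linear in its first argument, v \in perp I <-> forall w \in I, form v w = 0. *)
Definition perp (I : {vspace V}) : {vspace V} :=
  lker (linfun (fun v : V => \row_(i < \dim I) form v (vbasis I)`_i)
        : 'Hom(V, 'rV[R]_(\dim I))).

End Metric3Lie.

(* Main.v *)
Require Import Defs.
From HB Require Import structures.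
From mathcomp Require Import all_boot all_order all_algebra.
From mathcomp Require Import reals zify.
Set Implicit Arguments. Unset Strict Implicit. Unset Printing Implicit Defensive.
Import Order.TTheory GRing.Theory Num.Theory.
Local Open Scope ring_scope.

Lemma linfunE' (R : fieldType) (aT rT : vectType R) (f : aT -> rT) (Hf : linear f) : linfun f =1 f.
Proof. move=> x.
pose g : {linear aT -> rT} := HB.pack f (GRing.isLinear.Build R aT rT *:%R f Hf).
exact: (lfunE g x). Qed.

Section Aux.
Variables (R : realType) (V : vectType R).
Variable br : V -> V -> V -> V.
Variable form : V -> V -> R.
Hypothesis HV : metric3Lie br form.

Lemma form0l y : form 0 y = 0.
Proof.
have := form_linear1 HV 1 0 0 y; rewrite scale1r addr0 mul1r.
move=> H; have : form 0 y + form 0 y - form 0 y = form 0 y - form 0 y by rewrite -H.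
by rewrite addrK subrr.
Qed.

Lemma formDl x x' y : form (x + x') y = form x y + form x' y.
Proof. by have := form_linear1 HV 1 x x' y; rewrite scale1r mul1r. Qed.

Lemma formZl a x y : form (a *: x) y = a * form x y.
Proof. by have := form_linear1 HV a x 0 y; rewrite addr0 form0l addr0. Qed.

Lemma form_sum n (c : 'I_n -> R) (b : 'I_n -> V) y :
  form (\sum_i c i *: b i) y = \sum_i c i * form (b i) y.
Proof.
elim/big_rec2: _ => [|i s1 s2 _ IH]; first exact: form0l.
by rewrite formDl formZl IH.
Qed.

Lemma form_basis (U : {vspace V}) y :
  (forall i : 'I_(\dim U), form (vbasis U)`_i y = 0) ->
  forall u, u \in U -> form u y = 0.
Proof.
move=> H u Hu; rewrite (coord_vbasis Hu) form_sum.
by apply: big1 => i _; rewrite H mulr0.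
Qed.

Lemma rowl_lin n (b : 'I_n -> V) : linear (fun v : V => \row_(i < n) form v (b i)).
Proof. by move=> a u v; apply/rowP => i; rewrite !mxE (form_linear1 HV). Qed.

Lemma rowr_lin n (b : 'I_n -> V) : linear (fun v : V => \row_(i < n) form (b i) v).
Proof. by move=> a u v; apply/rowP => i; rewrite !mxE !(form_sym HV (b i)) (form_linear1 HV). Qed.

Lemma perpP (I : {vspace V}) v :
  reflect (forall w, w \in I -> form v w = 0) (v \in perp form I).
Proof.
rewrite /perp memv_ker linfunE' /=; last exact: (rowl_lin (fun i => (vbasis I)`_i)).
apply: (iffP eqP) => [H w Hw | H].
  rewrite (form_sym HV); apply: (form_basis _ Hw) => i.
  have := congr1 (fun M : 'rV_(\dim I) => M ord0 i) H.
  by rewrite !mxE (form_sym HV).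
apply/rowP => i; rewrite !mxE; apply: H; apply: vbasis_mem; apply: mem_nth; by rewrite size_tuple.
Qed.

Lemma br_cyc x y z : br x y z = br y z x.
Proof. by rewrite (br_skew12 HV) (br_skew23 HV) opprK. Qed.

Lemma perp_ideal I : ideal br I -> ideal br (perp form I).
Proof.
move=> HI x y z /perpP Hx; apply/perpP => w Hw.
rewrite br_cyc.
have := form_invariant HV y z x w.
rewrite Hx ?addr0 //.
by rewrite br_cyc br_cyc; apply: HI.
Qed.

Lemma perp_centr I : ideal br I -> forall x, x \in perp form I -> centraliser br I x.
Proof.
move=> HI x /perpP Hx w y Hw; apply: (form_nondeg HV) => s.
rewrite br_cyc.
have := form_invariant HV w y x s.
by rewrite Hx ?addr0 //; apply: HI.
Qed.

Lemma sub_pp (J : {vspace V}) : (J <= perp form (perp form J))%VS.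
Proof.
apply/subvP => v Hv; apply/perpP => w /perpP Hw.
by rewrite (form_sym HV) Hw.
Qed.

Lemma perp_mono (X Y : {vspace V}) : (X <= Y)%VS -> (perp form Y <= perp form X)%VS.
Proof.
move=> /subvP H; apply/subvP => v /perpP Hv; apply/perpP => w Hw; exact: Hv (H _ Hw).
Qed.

Lemma perp0 : perp form 0%VS = fullv.
Proof.
apply/vspaceP => v; rewrite memvf; apply/perpP => w; rewrite memv0 => /eqP ->.
by rewrite (form_sym HV) form0l.
Qed.

Lemma dim_perp_ge (X : {vspace V}) : (\dim {:V} <= \dim X + \dim (perp form X))%N.
Proof.
pose f := (linfun (fun v : V => \row_(i < \dim X) form v (vbasis X)`_i)
        : 'Hom(V, 'rV[R]_(\dim X))).
have E : \dim (lker f) = \dim (perp form X) by [].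
have := limg_ker_dim f fullv.
have : (\dim (f @: fullv) <= \dim X)%N.
  apply: leq_trans (dimvS (subvf _)) _.
  by rewrite dimvf dim_matrix mul1r.
move=> H1 H2; rewrite capfv E in H2. lia.
Qed.

Lemma dim_perp_le (X : {vspace V}) : (\dim X + \dim (perp form X) <= \dim {:V})%N.
Proof.
set C := ((perp form X)^C)%VS.
pose Q := (linfun (fun x : V => \row_(i < \dim C) form (vbasis C)`_i x)
          : 'Hom(V, 'rV[R]_(\dim C))).
have := limg_ker_dim Q X.
have -> : (X :&: lker Q)%VS = 0%VS.
  apply/eqP; rewrite -subv0; apply/subvP => x /memv_capP [Hx].
  rewrite memv_ker linfunE' /=; last exact: (rowr_lin (fun i => (vbasis C)`_i)).
  move=> /eqP HQ; rewrite memv0; apply/eqP.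
  apply: (form_nondeg HV) => v.
  rewrite (form_sym HV).
  have : v \in ((perp form X) + C)%VS by rewrite addv_complf memvf.
  case/memv_addP => p Hp [c Hc ->].
  rewrite formDl (perpP _ _ Hp) // add0r.
  apply: (form_basis _ Hc) => i.
  by have := congr1 (fun M : 'rV_(\dim C) => M ord0 i) HQ; rewrite !mxE.
rewrite dimv0 add0n => <-.
have Hd : (\dim (Q @: X) <= \dim C)%N.
  apply: leq_trans (dimvS (subvf _)) _.
  by rewrite dimvf dim_matrix mul1r.
have HC : \dim C = (\dim {:V} - \dim (perp form X))%N by apply: dimv_compl.
move: (\dim (Q @: X)) Hd => d; rewrite HC.
have := dimvS (subvf (perp form X)).
lia.
Qed.

Lemma perpperp (J : {vspace V}) : perp form (perp form J) = J.
Proof.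
apply/eqP; rewrite eq_sym eqEdim sub_pp /=.
have := dim_perp_ge J; have := dim_perp_le (perp form J). lia.
Qed.

End Aux.

Theorem mainTheorem9 (R : realType) (V : vectType R)
  (br : V -> V -> V -> V) (form : V -> V -> R)
  (HV : metric3Lie br form) (I : {vspace V}) (HI : ideal br I) :
  ideal br (perp form I) /\
  ideal_of br (perp form I) (centraliser br I) /\
  (minimal_ideal br I -> maximal_ideal br (perp form I)).
Proof.
have Hp := perp_ideal HV HI.
split; first exact: Hp.
split.
  split; first by move=> x Hx; apply: (perp_centr HV HI Hx).
  by move=> x s t Hx _ _; apply: Hp.
move=> [_ Hmin]; split => // J HJ HsJ.
have HpJ := perp_ideal HV HJ.
have : (perp form J <= I)%VS.
  by rewrite -{1}(perpperp HV I); apply: (perp_mono HV).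
case/(Hmin _ HpJ) => HE.
  right; by rewrite -(perpperp HV J) HE (perp0 HV).
left; by rewrite -(perpperp HV J) HE.
Qed.
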